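(* Let $\mathfrak g$ be a finite-dimensional Lie algebra over a field $\mathbb K$ of characteristic zero and $\mathfrak h\subset\mathfrak g$ a commutative ideal. Let $\Psi:\mathfrak h^*\to\mathfrak g$ be a polynomial map with $\Psi(h)\in\mathrm{St}(h)$ for all $h\in\mathfrak h^*$, and set $f_\Psi(x)=\langle x,\Psi(\pi(x))\rangle$. Then $f_\Psi\in\operatorname{Ann}(\mathfrak h)$. Moreover, the polynomial maps with this property form a Lie algebra under $[\Psi_1,\Psi_2](h)=[\Psi_1(h),\Psi_2(h)]$, and $\Psi\mapsto f_\Psi$ is a Lie algebra homomorphism into $S(\mathfrak g)$: $\{f_{\Psi_1},f_{\Psi_2}\}=f_{[\Psi_1,\Psi_2]}$.
   Context: $\pi:\mathfrak g^*\to\mathfrak h^*$ is restriction. For $h\in\mathfrak h^*$, $\mathrm{St}(h)=\{\xi\in\mathfrak g\mid\langle h,[\xi,\eta]\rangle=0\ \forall\eta\in\mathfrak h\}$. $S(\mathfrak g)$ is the polynomial algebra on $\mathfrak g^*$ with Lie–Poisson bracket $\{f,g\}(x)=\langle x,[df(x),dg(x)]\rangle$, and $\operatorname{Ann}(\mathfrak h)=\{f\in S(\mathfrak g)\mid\{f,\eta\}=0\ \forall\eta\in\mathfrak h\}$. *)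

(* Defs.v *)
From HB Require Import structures.
From mathcomp Require Import all_boot all_order all_algebra.
From mathcomp Require Import mpoly.
Set Implicit Arguments. Unset Strict Implicit. Unset Printing Implicit Defensive.
Import Order.TTheory GRing.Theory Num.Theory.
Local Open Scope ring_scope.

(* g = K^n (row vectors) with basis e_0..e_{n-1}; the bracket is given by
   structure constants c : [e_i, e_j] = \sum_k c i j k e_k. *)
Definition lieb (K : fieldType) (n : nat) (c : 'I_n -> 'I_n -> 'I_n -> K)
  (u v : 'rV[K]_n) : 'rV[K]_n :=
  \row_k \sum_(i < n) \sum_(j < n) u 0 i * v 0 j * c i j k.

Definition is_lie (K : fieldType) (n : nat) (c : 'I_n -> 'I_n -> 'I_n -> K) :=
  (forall u, lieb c u u = 0) /\
  (forall u v w, lieb c u (lieb c v w) + lieb c v (lieb c w u)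
                 + lieb c w (lieb c u v) = 0).

(* h = row space of B : 'M_(m,n), B row-free (rows b_0..b_{m-1} a basis of h).
   h is a commutative ideal. *)
Definition comm_ideal (K : fieldType) (n m : nat) (c : 'I_n -> 'I_n -> 'I_n -> K)
  (B : 'M[K]_(m, n)) :=
  (forall u eta, (eta <= B)%MS -> (lieb c u eta <= B)%MS) /\
  (forall eta1 eta2, (eta1 <= B)%MS -> (eta2 <= B)%MS -> lieb c eta1 eta2 = 0).

(* An element hh of h^* is given by its values hh 0 r = <hh, b_r>.
   Pairing <hh, v> for v in h, via the coordinates of v in the basis B. *)
Definition pairh (K : fieldType) (n m : nat) (B : 'M[K]_(m, n))
  (hh : 'rV[K]_m) (v : 'rV[K]_n) : K :=
  \sum_(r < m) (v *m pinvmx B) 0 r * hh 0 r.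

Definition in_St (K : fieldType) (n m : nat) (c : 'I_n -> 'I_n -> 'I_n -> K)
  (B : 'M[K]_(m, n)) (hh : 'rV[K]_m) (xi : 'rV[K]_n) : Prop :=
  forall eta, (eta <= B)%MS -> pairh B hh (lieb c xi eta) = 0.

(* A polynomial map Psi : h^* -> g, given by its n coordinate polynomials
   in the m coordinates of h^*. *)
Definition polymap (K : fieldType) (n m : nat) := 'I_n -> {mpoly K[m]}.

Definition pmap_eval (K : fieldType) (n m : nat) (Psi : polymap K n m)
  (hh : 'rV[K]_m) : 'rV[K]_n :=
  \row_i (Psi i).@[fun r => hh 0 r].

Definition stab_map (K : fieldType) (n m : nat) (c : 'I_n -> 'I_n -> 'I_n -> K)
  (B : 'M[K]_(m, n)) (Psi : polymap K n m) : Prop :=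
  forall hh, in_St c B hh (pmap_eval Psi hh).

(* pointwise bracket [Psi1, Psi2](h) = [Psi1(h), Psi2(h)] *)
Definition pmap_br (K : fieldType) (n m : nat) (c : 'I_n -> 'I_n -> 'I_n -> K)
  (P1 P2 : polymap K n m) : polymap K n m :=
  fun k => \sum_(i < n) \sum_(j < n) c i j k *: (P1 i * P2 j).

Definition pmap_add (K : fieldType) (n m : nat) (P1 P2 : polymap K n m) : polymap K n m :=
  fun k => P1 k + P2 k.
Definition pmap_scale (K : fieldType) (n m : nat) (a : K) (P : polymap K n m) :
  polymap K n m := fun k => a *: P k.

(* S(g) = {mpoly K[n]}: 'X_i is e_i viewed as a linear function on g^*. *)
Definition linS (K : fieldType) (n : nat) (v : 'rV[K]_n) : {mpoly K[n]} :=
  \sum_(i < n) v 0 i *: 'X_i.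

(* Lie-Poisson bracket {f,g}(x) = <x, [df(x), dg(x)]>, df(x) = \sum_i d_i f(x) e_i *)
Definition lpb (K : fieldType) (n : nat) (c : 'I_n -> 'I_n -> 'I_n -> K)
  (f g : {mpoly K[n]}) : {mpoly K[n]} :=
  \sum_(i < n) \sum_(j < n) \sum_(k < n)
     c i j k *: ('X_k * (mderiv i f * mderiv j g)).

Definition inAnn (K : fieldType) (n m : nat) (c : 'I_n -> 'I_n -> 'I_n -> K)
  (B : 'M[K]_(m, n)) (f : {mpoly K[n]}) : Prop :=
  forall eta, (eta <= B)%MS -> lpb c f (linS eta) = 0.

(* pi : g^* -> h^*, pi(x)_r = <x, b_r> = \sum_i B r i x_i *)
Definition pi_coord (K : fieldType) (n m : nat) (B : 'M[K]_(m, n)) :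
  m.-tuple {mpoly K[n]} := [tuple linS (row r B) | r < m].

Definition fPsi (K : fieldType) (n m : nat) (B : 'M[K]_(m, n)) (Psi : polymap K n m) :
  {mpoly K[n]} :=
  \sum_(i < n) 'X_i * comp_mpoly (pi_coord B) (Psi i).

(* Main.v *)
Require Import Defs.
From HB Require Import structures.
From mathcomp Require Import all_boot all_order all_algebra.
From mathcomp Require Import mpoly.
Import Order.TTheory GRing.Theory Num.Theory.
Local Open Scope ring_scope.

Module Aux.
Set Implicit Arguments. Unset Strict Implicit. Unset Printing Implicit Defensive.
Lemma mpoly_morph_uniq (R : comNzRingType) (n : nat) (S : nzRingType) (f g : {mpoly R[n]} -> S) :
  f 0 = 0 -> g 0 = 0 ->
  {morph f : x y / x + y} -> {morph g : x y / x + y} ->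
  {morph f : x y / x * y} -> {morph g : x y / x * y} ->
  (forall c, f c%:MP = g c%:MP) -> (forall i, f 'X_i = g 'X_i) ->
  forall p, f p = g p.
Proof.
move=> f0 g0 fD gD fM gM fC fX.
have mulC x y : f x = g x -> f y = g y -> f (x * y) = g (x * y).
  by move=> hx hy; rewrite fM gM hx hy.
have f1 : f 1 = g 1 by have := fC 1; rewrite mpolyC1.
elim/mpolyind => [|c m p _ _ IH]; first by rewrite f0 g0.
rewrite fD gD IH -mul_mpolyC; congr (_ + _); apply: (mulC) => //.
rewrite mpolyXE_id; elim/big_rec: _ => [//|i q _ IHq]; apply: (mulC) => //.
elim: (m i) => [|k IHk]; first by rewrite !expr0.
by rewrite exprS; apply: (mulC).
Qed.

Definition extv (K : Type) (n : nat) (v : 'I_n -> K) (t : K) (i : 'I_n.+1) : K :=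
  match split (cast_ord (esym (addn1 n)) i) with inl j => v j | inr _ => t end.

Lemma muniXU (R : comNzRingType) n (i : 'I_n.+1) :
  muni ('X_i : {mpoly R[n.+1]}) =
  match split (cast_ord (esym (addn1 n)) i) with inl j => ('X_j)%:P | inr _ => 'X end.
Proof. by rewrite /muni mmapX mmap1U. Qed.

Lemma muni_eval (R : comNzRingType) n (v : 'I_n -> R) (t : R) (p : {mpoly R[n.+1]}) :
  (map_poly (meval v) (muni p)).[t] = p.@[extv v t].
Proof.
pose f := fun p : {mpoly R[n.+1]} => (map_poly (meval v) (muni p)).[t].
change (f p = p.@[extv v t]).
apply: (mpoly_morph_uniq (f := f)).
- by rewrite /f !raddf0 horner0.
- by rewrite raddf0.
- by move=> x y; rewrite /f !raddfD /= hornerD.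
- by move=> x y; rewrite mevalD.
- by move=> x y; rewrite /f !rmorphM /= hornerM.
- by move=> x y; rewrite mevalM.
- by move=> c; rewrite /f muniC map_polyC hornerC /= !mevalC.
- move=> i; rewrite /f muniXU mevalXU /extv.
  by case: splitP => j _; rewrite ?map_polyC ?map_polyX ?hornerC ?hornerX /= ?mevalXU.
Qed.

Definition mback (R : comNzRingType) n (q : {poly {mpoly R[n]}}) : {mpoly R[n.+1]} :=
  (map_poly (@mwiden n R) q).['X_ord_max].

Lemma mback_muni (R : comNzRingType) n (p : {mpoly R[n.+1]}) : mback (muni p) = p.
Proof.
apply: (mpoly_morph_uniq (f := fun p => mback (muni p)) (g := id)) => //.
- by rewrite /mback !raddf0 horner0.
- by move=> x y; rewrite /mback !raddfD /= hornerD.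
- by move=> x y; rewrite /mback !rmorphM /= hornerM.
- by move=> c; rewrite /mback muniC map_polyC hornerC /=; apply: mwidenC.
- move=> i; rewrite /mback muniXU.
  case: splitP => j Hj; rewrite ?map_polyC ?map_polyX ?hornerC ?hornerX.
    transitivity ('X_[mnmwiden U_(j)] : {mpoly R[n.+1]}); first exact: mwidenX.
    rewrite mnmwiden1; congr ('X_ _); apply/val_inj => /=.
    by rewrite -Hj.
  congr ('X_ _); apply/val_inj => /=.
  by move: Hj; rewrite ord1 /= addn0.
Qed.

Lemma poly_vanish (K : fieldType) : [pchar K] =i pred0 ->
  forall q : {poly K}, (forall t, q.[t] = 0) -> q = 0.
Proof.
move=> /pcharf0P ch q hq.
apply: (@roots_geq_poly_eq0 _ q [seq i%:R | i <- iota 0 (size q)]).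
- by apply/allP => x /mapP [i _ ->]; rewrite /root hq.
- rewrite map_inj_uniq ?iota_uniq // => i j.
  have H a b : (a <= b)%N -> a%:R = b%:R :> K -> a = b.
    move=> le /eqP; rewrite eq_sym -subr_eq0 -natrB // ch subn_eq0 => h.
    by apply/eqP; rewrite eqn_leq le.
  by case/orP: (leq_total i j) => [/H h /h //|/H h /esym /h].
- by rewrite size_map size_iota.
Qed.

Lemma mpoly_vanish (K : fieldType) : [pchar K] =i pred0 ->
  forall n (p : {mpoly K[n]}), (forall v, p.@[v] = 0) -> p = 0.
Proof.
move=> ch; elim=> [|n IH] p hp.
  have E : forall q : {mpoly K[0]}, (q.@[fun _ => 0])%:MP = q.
    apply: (mpoly_morph_uniq (f := fun q => (q.@[fun _ => 0])%:MP) (g := id)) => //.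
    - by rewrite meval0.
    - by move=> x y; rewrite mevalD mpolyCD.
    - by move=> x y; rewrite mevalM mpolyCM.
    - by move=> c; rewrite mevalC.
    - by case.
  by rewrite -[p]E hp.
have hu : muni p = 0.
  apply/polyP => k; rewrite coef0; apply: IH => v.
  have w0 : map_poly (meval v) (muni p) = 0.
    by apply: poly_vanish => // t; rewrite muni_eval hp.
  by have := congr1 (fun q : {poly K} => q`_k) w0; rewrite coef_map coef0.
by rewrite -(mback_muni p) hu /mback raddf0 horner0.
Qed.

Lemma mderivXU (R : comNzRingType) n (i j : 'I_n) :
  mderiv i ('X_j : {mpoly R[n]}) = ((j == i)%:R)%:MP.
Proof.
rewrite mderivX mnm1E; case: eqP => [->|_].
  have -> : (U_(i) - U_(i))%MM = 0%MM by apply/mnmP=> k; rewrite !mnmE subnn.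
  by rewrite mpolyX0 -mpolyC1 -mul_mpolyC mulr1.
by rewrite scale0r mpolyC0.
Qed.

Lemma mderiv_comp (R : comNzRingType) n m (lq : m.-tuple {mpoly R[n]}) (p : {mpoly R[m]}) i :
  mderiv i (p \mPo lq) = \sum_(r < m) (mderiv r p \mPo lq) * mderiv i (tnth lq r).
Proof.
pose CR (p : {mpoly R[m]}) := forall i,
  mderiv i (p \mPo lq) = \sum_(r < m) (mderiv r p \mPo lq) * mderiv i (tnth lq r).
have CRD x y : CR x -> CR y -> CR (x + y).
  move=> hx hy k; rewrite comp_mpolyD mderivD hx hy -big_split /=.
  by apply: eq_bigr => r _; rewrite mderivD comp_mpolyD mulrDl.
have CRM x y : CR x -> CR y -> CR (x * y).
  move=> hx hy k; rewrite rmorphM /= mderivM hx hy mulr_suml mulr_sumr -big_split /=.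
  apply: eq_bigr => r _; rewrite mderivM comp_mpolyD !rmorphM /= mulrDl.
  by congr (_ + _); rewrite -!mulrA; congr (_ * _); rewrite mulrC.
have CRC c : CR c%:MP.
  by move=> k; rewrite comp_mpolyC mderivC big1 // => r _; rewrite mderivC comp_mpolyC mul0r.
have CRX j : CR 'X_j.
  move=> k; rewrite comp_mpolyXU (bigD1 j) //= big1 ?addr0.
    by rewrite mderivXU eqxx comp_mpolyC mul1r (tnth_nth 0).
  by move=> r /negbTE nr; rewrite mderivXU eq_sym nr comp_mpolyC mul0r.
suff : CR p by apply.
elim/mpolyind: p => [|c mm p _ _ IH]; first by rewrite -mpolyC0.
apply: (CRD) => //; rewrite -mul_mpolyC; apply: (CRM) => //.
rewrite mpolyXE_id; elim/big_rec: _ => [|r q _ IHq]; first by rewrite -mpolyC1.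
apply: (CRM) => //; elim: (mm r) => [|k IHk]; first by rewrite expr0 -mpolyC1.
by rewrite exprS; apply: (CRM).
Qed.
Lemma meval_sum (R : comNzRingType) k (v : 'I_k -> R) (I : Type) (r : seq I) (P : pred I) (F : I -> {mpoly R[k]}) :
  (\sum_(i <- r | P i) F i).@[v] = \sum_(i <- r | P i) (F i).@[v].
Proof. by apply: big_morph; [apply: mevalD | apply: meval0]. Qed.

Lemma mderiv_sum (R : comNzRingType) k (i : 'I_k) (I : Type) (r : seq I) (P : pred I) (F : I -> {mpoly R[k]}) :
  mderiv i (\sum_(j <- r | P j) F j) = \sum_(j <- r | P j) mderiv i (F j).
Proof. by apply: big_morph; [apply: mderivD | apply: mderiv0]. Qed.

Section Lie.
Variables (K : fieldType) (n m : nat) (c : 'I_n -> 'I_n -> 'I_n -> K) (B : 'M[K]_(m, n)).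

Lemma liebDl u v w : lieb c (u + v) w = lieb c u w + lieb c v w.
Proof.
apply/rowP => k; rewrite !mxE -big_split /=; apply: eq_bigr => i _.
rewrite -big_split /=; apply: eq_bigr => j _; by rewrite !mxE !mulrDl.
Qed.

Lemma liebDr u v w : lieb c u (v + w) = lieb c u v + lieb c u w.
Proof.
apply/rowP => k; rewrite !mxE -big_split /=; apply: eq_bigr => i _.
rewrite -big_split /=; apply: eq_bigr => j _; by rewrite !mxE mulrDr mulrDl.
Qed.

Lemma liebZl a u w : lieb c (a *: u) w = a *: lieb c u w.
Proof.
apply/rowP => k; rewrite !mxE mulr_sumr; apply: eq_bigr => i _.
rewrite mulr_sumr; apply: eq_bigr => j _; by rewrite !mxE !mulrA.
Qed.

Lemma liebZr a u w : lieb c u (a *: w) = a *: lieb c u w.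
Proof.
apply/rowP => k; rewrite !mxE mulr_sumr; apply: eq_bigr => i _.
rewrite mulr_sumr; apply: eq_bigr => j _; by rewrite !mxE mulrCA !mulrA.
Qed.

Lemma liebNr u w : lieb c u (- w) = - lieb c u w.
Proof. by rewrite -scaleN1r liebZr scaleN1r. Qed.

Lemma lieb0l w : lieb c 0 w = 0.
Proof. by have := liebZl 0 0 w; rewrite !scale0r. Qed.

Lemma lieb_anti : is_lie c -> forall u v, lieb c u v = - lieb c v u.
Proof.
move=> [alt _] u v; apply/eqP; rewrite -subr_eq0 opprK.
have := alt (u + v); rewrite liebDl !liebDr !alt add0r addr0 => ->.
by [].
Qed.

Lemma pairhD hh u v : pairh B hh (u + v) = pairh B hh u + pairh B hh v.
Proof.
rewrite /pairh -big_split /=; apply: eq_bigr => r _.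
by rewrite mulmxDl mxE mulrDl.
Qed.

Lemma pairhZ hh a u : pairh B hh (a *: u) = a * pairh B hh u.
Proof.
rewrite /pairh mulr_sumr; apply: eq_bigr => r _.
by rewrite -scalemxAl mxE mulrA.
Qed.

Lemma pairhN hh u : pairh B hh (- u) = - pairh B hh u.
Proof. by rewrite -scaleN1r pairhZ mulN1r. Qed.

Lemma St_br hh a b : is_lie c -> comm_ideal c B ->
  in_St c B hh a -> in_St c B hh b -> in_St c B hh (lieb c a b).
Proof.
move=> L [idl _] ha hb eta heta.
have [_ jac] := L.
have J := jac eta a b.
have -> : lieb c (lieb c a b) eta = lieb c a (lieb c b eta) - lieb c b (lieb c a eta).
  rewrite (lieb_anti L (lieb c a b)); rewrite (lieb_anti L eta a) liebNr in J.
  by move/eqP: J; rewrite -addrA addrC addr_eq0 => /eqP ->.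
by rewrite pairhD pairhN ha ?hb ?idl // subrr.
Qed.

Lemma eval_add (P1 P2 : polymap K n m) hh :
  pmap_eval (pmap_add P1 P2) hh = pmap_eval P1 hh + pmap_eval P2 hh.
Proof. by apply/rowP => k; rewrite !mxE /pmap_add /= mevalD. Qed.

Lemma eval_scale a (P : polymap K n m) hh :
  pmap_eval (pmap_scale a P) hh = a *: pmap_eval P hh.
Proof. by apply/rowP => k; rewrite !mxE /pmap_scale /= mevalZ. Qed.

Lemma eval_br (P1 P2 : polymap K n m) hh :
  pmap_eval (pmap_br c P1 P2) hh = lieb c (pmap_eval P1 hh) (pmap_eval P2 hh).
Proof.
apply/rowP => k; rewrite !mxE /pmap_br meval_sum; apply: eq_bigr => i _.
rewrite meval_sum; apply: eq_bigr => j _.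
by rewrite mevalZ mevalM !mxE mulrC.
Qed.

Definition hx (x : 'I_n -> K) : 'rV[K]_m := \row_r \sum_(i < n) B r i * x i.
Definition xpair (x : 'I_n -> K) (w : 'rV[K]_n) : K := \sum_(k < n) x k * w 0 k.

Lemma xpairD x u v : xpair x (u + v) = xpair x u + xpair x v.
Proof. by rewrite /xpair -big_split; apply: eq_bigr => k _; rewrite mxE mulrDr. Qed.

Lemma xpairN x u : xpair x (- u) = - xpair x u.
Proof. by rewrite /xpair -sumrN; apply: eq_bigr => k _; rewrite mxE mulrN. Qed.

Lemma xpair0 x : xpair x 0 = 0.
Proof. by rewrite /xpair big1 // => k _; rewrite mxE mulr0. Qed.

Lemma xpair_h x w : (w <= B)%MS -> xpair x w = pairh B (hx x) w.
Proof.
move=> hw; rewrite -{1}(mulmxKpV hw) /pairh /xpair.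
set y := w *m pinvmx B.
under eq_bigr => k _ do rewrite mxE mulr_sumr.
rewrite exchange_big /=; apply: eq_bigr => r _.
rewrite /hx [X in _ = _ * X]mxE mulr_sumr; apply: eq_bigr => k _.
by rewrite mulrC -mulrA.
Qed.

Lemma eval_linS (w : 'rV[K]_n) x : (linS w).@[x] = \sum_(i < n) w 0 i * x i.
Proof. by rewrite /linS meval_sum; apply: eq_bigr => i _; rewrite mevalZ mevalXU. Qed.

Lemma eval_comp (p : {mpoly K[m]}) x :
  (p \mPo pi_coord B).@[x] = p.@[fun r => hx x 0 r].
Proof.
rewrite comp_mpoly_meval; apply: meval_eq => r.
by rewrite tnth_mktuple eval_linS !mxE; apply: eq_bigr => i _; rewrite mxE.
Qed.

Lemma eval_fPsi (Psi : polymap K n m) x :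
  (fPsi B Psi).@[x] = xpair x (pmap_eval Psi (hx x)).
Proof.
rewrite /fPsi meval_sum; apply: eq_bigr => i _.
by rewrite mevalM mevalXU eval_comp mxE.
Qed.


Definition dvec (x : 'I_n -> K) (f : {mpoly K[n]}) : 'rV[K]_n := \row_i (mderiv i f).@[x].

Lemma eval_lpb f g x : (lpb c f g).@[x] = xpair x (lieb c (dvec x f) (dvec x g)).
Proof.
rewrite /lpb /xpair meval_sum.
under eq_bigr => i _ do rewrite meval_sum.
under eq_bigr => i _ do under eq_bigr => j _ do rewrite meval_sum.
under [RHS]eq_bigr => k _ do rewrite mxE mulr_sumr.
rewrite [RHS]exchange_big; apply: eq_bigr => i _.
under [RHS]eq_bigr => k _ do rewrite mulr_sumr.
rewrite [RHS]exchange_big; apply: eq_bigr => j _.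
apply: eq_bigr => k _.
by rewrite mevalZ !mevalM mevalXU !mxE mulrC -!mulrA.
Qed.

Lemma dvec_linS x w : dvec x (linS w) = w.
Proof.
apply/rowP => i; rewrite mxE /linS.
rewrite mderiv_sum meval_sum (bigD1 i) //= big1 ?addr0.
  by rewrite mderivZ mderivXU eqxx mevalZ mevalC mulr1.
by move=> j /negbTE nj; rewrite mderivZ mderivXU nj mevalZ mevalC mulr0.
Qed.

Lemma dvec_fPsi x (Psi : polymap K n m) : exists dd : 'rV[K]_m,
  dvec x (fPsi B Psi) = pmap_eval Psi (hx x) + dd *m B.
Proof.
exists (\row_r \sum_(j < n) x j * (mderiv r (Psi j)).@[fun r => hx x 0 r]).
apply/rowP => i; rewrite !mxE /fPsi.
rewrite mderiv_sum meval_sum.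
under eq_bigr => j _ do rewrite mderivM mevalD !mevalM mderivXU mevalC mevalXU.
rewrite big_split /= (bigD1 i) //= big1 ?addr0; last first.
  by move=> j /negbTE nj; rewrite nj mul0r.
rewrite eqxx mul1r eval_comp; congr (_ + _).
under eq_bigr => j _ do rewrite mderiv_comp meval_sum mulr_sumr.
rewrite exchange_big; apply: eq_bigr => r _.
rewrite !mxE mulr_suml; apply: eq_bigr => j _.
rewrite mevalM eval_comp tnth_mktuple mulrA; congr (_ * _).
by have := congr1 (fun v : 'rV[K]_n => v 0 i) (dvec_linS x (row r B)); rewrite /= !mxE.
Qed.

End Lie.
End Aux.
Import Aux.
Theorem lemma3 (K : fieldType) (n m : nat) (c : 'I_n -> 'I_n -> 'I_n -> K)
  (B : 'M[K]_(m, n)) :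
  [pchar K] =i pred0 ->
  is_lie c -> row_free B -> comm_ideal c B ->
  (forall Psi : polymap K n m, stab_map c B Psi -> inAnn c B (fPsi B Psi)) /\
  (forall P1 P2 : polymap K n m, stab_map c B P1 -> stab_map c B P2 ->
     [/\ stab_map c B (pmap_add P1 P2),
         (forall a : K, stab_map c B (pmap_scale a P1)) &
         stab_map c B (pmap_br c P1 P2)] /\
     [/\ fPsi B (pmap_add P1 P2) = fPsi B P1 + fPsi B P2,
         (forall a : K, fPsi B (pmap_scale a P1) = a *: fPsi B P1) &
         lpb c (fPsi B P1) (fPsi B P2) = fPsi B (pmap_br c P1 P2)]).
Proof.
move=> ch L _ CI; have [idl cmm] := CI.
split.
  move=> Psi hPsi eta heta; apply: (mpoly_vanish ch) => x.
  rewrite eval_lpb dvec_linS; have [dd ->] := dvec_fPsi B x Psi.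
  rewrite liebDl (cmm _ _ (submxMl _ _) heta) addr0 (xpair_h x (idl _ _ heta)).
  exact: hPsi.
move=> P1 P2 h1 h2; split; first split.
- by move=> hh eta heta; rewrite eval_add liebDl pairhD h1 ?h2 // addr0.
- by move=> a hh eta heta; rewrite eval_scale liebZl pairhZ h1 // mulr0.
- by move=> hh; rewrite eval_br; apply: St_br.
split.
- rewrite /fPsi -big_split /=; apply: eq_bigr => i _.
  by rewrite /pmap_add /= comp_mpolyD mulrDr.
- move=> a; rewrite /fPsi scaler_sumr; apply: eq_bigr => i _.
  by rewrite /pmap_scale /= comp_mpolyZ scalerAr.
apply/eqP; rewrite -subr_eq0; apply/eqP; apply: (mpoly_vanish ch) => x.
rewrite mevalB eval_lpb eval_fPsi eval_br.
have [d1 ->] := dvec_fPsi B x P1; have [d2 ->] := dvec_fPsi B x P2.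
rewrite !liebDl !liebDr (cmm _ _ (submxMl _ _) (submxMl _ _)) addr0.
rewrite (lieb_anti L (d1 *m B)) !xpairD xpairN.
rewrite (xpair_h _ (idl _ _ (submxMl _ _))) h1 ?submxMl //.
rewrite (xpair_h _ (idl _ _ (submxMl _ _))) h2 ?submxMl //.
by rewrite oppr0 !addr0 subrr.
Qed.
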